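(* Let $2\leqslant k\leqslant m\leqslant d$ be integers such that $d\geqslant \binom{m}{k}-1+m$. Then $$n(k,d)\geqslant \left(d-\binom{m}{k}+1\right)^k\cdot\frac{\binom{m}{k}}{m^k}.$$ Consequently, for every fixed integer $k\geqslant 2$, $n(k,d)\geqslant (1-o(1))\frac{d^k}{k!}$ as $d\to\infty$.
   Context: A standard box in $\mathbb{R}^d$ is a set $K=K_1\times\cdots\times K_d$ where each $K_i\subset\mathbb{R}$ is a closed interval. For integers $1\leqslant k\leqslant d$, two standard boxes $K,L\subset\mathbb{R}^d$ are $k$-neighborly if $d-k\leqslant \dim(K\cap L)\leqslant d-1$, and a family of standard boxes is $k$-neighborly if every two distinct members are $k$-neighborly. $n(k,d)$ denotes the maximum possible cardinality of a $k$-neighborly family of standard boxes in $\mathbb{R}^d$. *)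

(* Defs.v *)
From mathcomp Require Import all_boot all_order all_algebra.
From mathcomp Require Import reals.
Set Implicit Arguments. Unset Strict Implicit. Unset Printing Implicit Defensive.
Import Order.TTheory GRing.Theory Num.Theory.
Local Open Scope ring_scope.

(* A standard box in R^d: coordinate i is the closed interval [(B i).1, (B i).2]. *)
Definition box (R : realType) (d : nat) := 'I_d -> R * R.

Definition is_box (R : realType) (d : nat) (B : box R d) : Prop :=
  forall i, (B i).1 < (B i).2.

Definition inter_nonempty (R : realType) (d : nat) (K L : box R d) : Prop :=
  forall i, Num.max (K i).1 (L i).1 <= Num.min (K i).2 (L i).2.

Definition inter_dim (R : realType) (d : nat) (K L : box R d) : nat :=
  #|[set i : 'I_d | Num.max (K i).1 (L i).1 < Num.min (K i).2 (L i).2]|.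

(* k-neighborly: d - k <= dim (K ∩ L) <= d - 1  (dim of the empty set is -1) *)
Definition k_neighborly (R : realType) (k d : nat) (K L : box R d) : Prop :=
  inter_nonempty K L /\ (d - k <= inter_dim K L <= d - 1)%N.

Definition neighborly_family (R : realType) (k d N : nat) (F : 'I_N -> box R d) : Prop :=
  (forall i, is_box (F i)) /\
  (forall i j : 'I_N, i != j -> k_neighborly k (F i) (F j)).

(* Main.v *)
Require Import Defs.
From mathcomp Require Import all_boot all_order all_algebra.
From mathcomp Require Import reals.
From mathcomp Require Import zify ring lra.
Import Order.TTheory GRing.Theory Num.Theory.
Local Open Scope ring_scope.

Definition conf (u v : option bool) : bool :=
  match u, v with Some b, Some b' => b != b' | _, _ => false end.

Definition bx (R : realType) (u : option bool) : R * R :=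
  match u with None => (0, 2) | Some false => (0, 1) | Some true => (1, 2) end.

Lemma bx_dim (R : realType) u v : (Num.max (bx R u).1 (bx R v).1 < Num.min (bx R u).2 (bx R v).2) = ~~ conf u v.
Proof.
have h21 : (2 <= 1 :> R) = false by apply/negP; lra.
have h10 : (1 <= 0 :> R) = false by apply/negP; lra.
case: u v => [[]|] [[]|] /=; rewrite ?maxxx ?minxx; rewrite ?maxEle ?minEle ?ler01 ?ler_nat ?ler1n ?ler0n ?h21 ?h10 //=;
  try lra; try (apply/negP; lra).
Qed.
Lemma bx_ne (R : realType) u v : Num.max (bx R u).1 (bx R v).1 <= Num.min (bx R u).2 (bx R v).2.
Proof.
have h21 : (2 <= 1 :> R) = false by apply/negP; lra.
have h10 : (1 <= 0 :> R) = false by apply/negP; lra.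
case: u v => [[]|] [[]|] /=; rewrite ?maxxx ?minxx; rewrite ?maxEle ?minEle ?ler01 ?ler_nat ?ler1n ?ler0n ?h21 ?h10 //=;
  try lra.
Qed.
Lemma bx_box (R : realType) u : (bx R u).1 < (bx R u).2.
Proof. case: u => [[]|] /=; lra. Qed.

Lemma words_family (R : realType) k d N (w : 'I_N -> 'I_d -> option bool) :
  (forall i j, i != j -> (0 < #|[set t | conf (w i t) (w j t)]| <= k)%N) ->
  @neighborly_family R k d N (fun i t => bx R (w i t)).
Proof.
move=> H; split=> [i t|i j ij]; first exact: bx_box.
split=> [t|]; first exact: bx_ne.
rewrite /inter_dim.
have -> : [set t | Num.max (bx R (w i t)).1 (bx R (w j t)).1 < Num.min (bx R (w i t)).2 (bx R (w j t)).2]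
   = ~: [set t | conf (w i t) (w j t)].
  by apply/setP => t; rewrite !inE bx_dim.
have := cardsC [set t | conf (w i t) (w j t)]; rewrite card_ord.
have := H _ _ ij. lia.
Qed.

Local Open Scope nat_scope.
Definition pc (r j : nat) : option bool :=
  if (j < r)%N then Some true else if j == r then Some false else None.

Lemma pc_conf r r' j : conf (pc r j) (pc r' j) = (r != r') && (j == minn r r').
Proof.
rewrite /pc.
case: (ltngtP j r) => h1; case: (ltngtP j r') => h2 /=;
  case: eqP => h3; case: eqP => h4 //=; lia.
Qed.

Notation Sk m k := {S : {set 'I_m} | #|S| == k}.
Notation Ti m k q := (Sk m k * k.-tuple 'I_q.+1)%type.
Definition Eseq {m k q} (i : Ti m k q) : seq nat := [seq val s | s <- enum (val i.1)].
Definition av {m k q} (i : Ti m k q) (s : nat) : nat :=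
  nth 0 [seq val y | y <- i.2] (index s (Eseq i)).
Definition wd {m k q} (i : Ti m k q) (j : nat) : option bool :=
  if (j < #|{: Sk m k}|.-1)%N then pc (enum_rank i.1) j else
  if (j - #|{: Sk m k}|.-1 < m * q)%N then
    (if (j - #|{: Sk m k}|.-1) %/ q \in Eseq i
     then pc (av i ((j - #|{: Sk m k}|.-1) %/ q)) ((j - #|{: Sk m k}|.-1) %% q) else None)
  else None.
Definition Lw {m k q} (i i' : Ti m k q) : seq nat :=
  (if i.1 != i'.1 then [:: minn (enum_rank i.1) (enum_rank i'.1)] else [::]) ++
  [seq #|{: Sk m k}|.-1 + val s * q + minn (av i (val s)) (av i' (val s)) | s <- enum (val i.1 :&: val i'.1)].

Lemma conf_in m k q (i i' : Ti m k q) j : conf (wd i j) (wd i' j) -> j \in Lw i i'.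
Proof.
rewrite /wd; case: ifP => hj.
  rewrite pc_conf => /andP[hr /eqP ->]; rewrite mem_cat; apply/orP; left.
  have -> : i.1 != i'.1 by apply: contraNneq hr => ->.
  by rewrite inE.
case: ifP => hj2 //.
set j' := j - _.
case: ifP => hs1 //; case: ifP => hs2; last by case: pc.
rewrite pc_conf => /andP[_ /eqP hm].
case/mapP: hs1 => s0 hs0 e0; case/mapP: hs2 => s1 hs1 e1.
have es : s1 = s0 by apply: val_inj; rewrite -e0 -e1.
subst s1.
rewrite mem_cat; apply/orP; right; apply/mapP; exists s0.
  rewrite mem_enum inE; rewrite !mem_enum in hs0 hs1; by rewrite hs0 hs1.
rewrite -e0 -hm.
have h := divn_eq j' q. move: h hj. rewrite /j'. generalize ((j - #|{: Sk m k}|.-1) %/ q * q) ((j - #|{: Sk m k}|.-1) %% q) => A B. move=> h1 h2; apply/eqP; move: h1 h2; clear. move: (#|{: Sk m k}|.-1) => c. lia.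
Qed.

Lemma card_conf m k q d (i i' : Ti m k q) :
  #|[set t : 'I_d | conf (wd i t) (wd i' t)]| <= (i.1 != i'.1) + #|val i.1 :&: val i'.1|.
Proof.
have -> : ((i.1 != i'.1) + #|val i.1 :&: val i'.1|)%N = size (Lw i i').
  by rewrite /Lw size_cat size_map -cardE; case: (i.1 != i'.1).
rewrite cardE -(size_map val); apply: uniq_leq_size.
  by rewrite (map_inj_uniq val_inj) enum_uniq.
move=> j /mapP [t]; rewrite mem_enum inE => ht ->; exact: conf_in.
Qed.

Lemma card_inter m k (S S' : Sk m k) : S != S' -> #|val S :&: val S'| < k.
Proof.
move=> ne; rewrite ltnNge; apply: contra ne => h.
have cS := eqP (valP S); have cS' := eqP (valP S').
have e1 : val S :&: val S' = val S.
  apply/eqP; rewrite eqEcard subsetIl cS; exact: h.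
apply/eqP; apply: val_inj; apply/eqP.
rewrite eqEcard cS cS' leqnn andbT.
by rewrite -e1 subsetIr.
Qed.

Lemma conf_ex m k q d (i i' : Ti m k q) : i != i' -> #|{: Sk m k}|.-1 + m * q <= d ->
  exists t : 'I_d, conf (wd i t) (wd i' t).
Proof.
move=> ne hd.
case: (eqVneq i.1 i'.1) => e1; last first.
  have hr : (enum_rank i.1 : nat) != enum_rank i'.1.
    by apply: contra e1 => /eqP /val_inj /enum_rank_inj ->.
  have r1 := ltn_ord (enum_rank i.1); have r2 := ltn_ord (enum_rank i'.1).
  have hj : minn (enum_rank i.1) (enum_rank i'.1) < #|{: Sk m k}|.-1.
    move: hr r1 r2; move: (#|{: Sk m k}|) (enum_rank i.1 : nat) (enum_rank i'.1 : nat) => c a b. 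
    lia.
  have hjd : minn (enum_rank i.1) (enum_rank i'.1) < d.
    move: hj hd; move: (minn _ _) (#|{: Sk m k}|.-1) => a c; lia.
  exists (Ordinal hjd); rewrite /wd /= hj pc_conf eqxx andbT; exact: hr.
have e2 : i.2 != i'.2.
  apply: contra ne => /eqP e2; apply/eqP; move: e1 e2; case: i => [a b]; case: i' => [a' b'] /= -> -> //.
have [p hp] : exists p : 'I_k, tnth i.2 p != tnth i'.2 p.
  case: (pickP (fun p => tnth i.2 p != tnth i'.2 p)) => [p hp|hn]; first by exists p.
  by move: e2; rewrite (eq_from_tnth (fun p => eqP (negbFE (hn p)))) eqxx.
have eE : Eseq i' = Eseq i by rewrite /Eseq e1.
have sE : size (Eseq i) = k by rewrite /Eseq size_map -cardE (eqP (valP i.1)).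
have uE : uniq (Eseq i) by rewrite /Eseq (map_inj_uniq val_inj) enum_uniq.
set s := nth 0 (Eseq i) p.
have sin : s \in Eseq i by apply: mem_nth; rewrite sE.
have si : index s (Eseq i) = p by rewrite index_uniq // sE.
have sm : s < m by case/mapP: sin => s0 _ e; rewrite e ltn_ord.
have a1 : av i s = tnth i.2 p.
  by rewrite /av si (nth_map ord0) ?size_tuple // -tnth_nth.
have a2 : av i' s = tnth i'.2 p.
  by rewrite /av eE si (nth_map ord0) ?size_tuple // -tnth_nth.
have ha : (tnth i.2 p : nat) != tnth i'.2 p by apply: contra hp => /eqP /val_inj ->.
have b1 := ltn_ord (tnth i.2 p); have b2 := ltn_ord (tnth i'.2 p).
set mn := minn (tnth i.2 p) (tnth i'.2 p).
have hmn : mn < q by move: ha b1 b2; rewrite /mn; move: (tnth i.2 p : nat) (tnth i'.2 p : nat) => a b; lia.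
have hq : 0 < q by move: hmn; lia.
have hsq : s * q + mn < m * q.
  apply: (@leq_trans (s.+1 * q)); first by rewrite mulSn; move: hmn; lia.
  by rewrite leq_mul2r sm orbT.
have hjd : #|{: Sk m k}|.-1 + (s * q + mn) < d.
  move: hsq hd; move: (s * q + mn) (m * q) (#|{: Sk m k}|.-1) => a b c; lia.
exists (Ordinal hjd); rewrite /wd /=.
have -> : (#|{: Sk m k}|.-1 + (s * q + mn) < #|{: Sk m k}|.-1) = false.
  by move: (s * q + mn) (#|{: Sk m k}|.-1) => a c; lia.
rewrite addKn hsq.
have -> : (s * q + mn) %/ q = s by rewrite divnMDl // divn_small // addn0.
have -> : (s * q + mn) %% q = mn by rewrite modnMDl modn_small.
by rewrite eE sin a1 a2 pc_conf ha eqxx.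
Qed.

Lemma card_Sk m k : #|{: Sk m k}| = 'C(m, k).
Proof.
rewrite card_sig; have := card_draws ('I_m) k; rewrite card_ord => <-.
apply: eq_card => S; by rewrite !inE.
Qed.

Lemma construction (R : realType) k m q d : 'C(m, k).-1 + m * q <= d ->
  exists N (F : 'I_N -> box R d), @neighborly_family R k d N F /\ N = 'C(m, k) * q.+1 ^ k.
Proof.
move=> hd; rewrite -card_Sk in hd.
exists #|{: Ti m k q}|, (fun i t => bx R (wd (enum_val i) t)); split; last first.
  by rewrite card_prod card_Sk card_tuple card_ord.
apply: words_family => i j ij.
have ne : enum_val i != enum_val j by apply: contra ij => /eqP /enum_val_inj ->.
apply/andP; split.
  apply/card_gt0P; have [t ht] := @conf_ex _ _ _ _ _ _ ne hd; exists t; by rewrite inE.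
apply: leq_trans (card_conf _ _ _ _ _ _) _.
case: eqVneq => e /=.
  by rewrite e setIid (eqP (valP (enum_val j).1)).
by rewrite add1n; exact: (@card_inter _ _ _ _ e).
Qed.

Lemma ffact_ge m k : (m - k) ^ k <= m ^_ k.
Proof.
elim: k m => [|k IH] m; first by rewrite expn0 ffactn0.
rewrite ffactnS expnS; apply: leq_mul; first by rewrite leq_subr.
have := IH m.-1; have -> : m.-1 - k = m - k.+1 by lia. done.
Qed.

Local Open Scope ring_scope.

Lemma bern (R : realType) (x y : R) n : 0 <= y -> y <= x ->
  x ^+ n.+1 - n.+1%:R * x ^+ n * (x - y) <= y ^+ n.+1.
Proof.
move=> y0 yx; elim: n => [|n IH]; first by rewrite !expr1 expr0 mulr1 mul1r; lra.
have P0 : 0 <= x ^+ n by apply: exprn_ge0; lra.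
move: IH; rewrite !exprS; set P := x ^+ n; set Y := y ^+ n => IH.
have h1 : y * (x * P - n.+1%:R * P * (x - y)) <= y * (y * Y) by apply: ler_wpM2l.
have h2 : 0 <= n.+1%:R * P * ((x - y) * (x - y)) by apply: mulr_ge0; [apply: mulr_ge0 => //; apply: ler0n| nra].
rewrite -natr1 in h1 h2 *. rewrite -natr1.
nra.
Qed.



Lemma part1 (R : realType) (k m d : nat) : (2 <= k)%N -> (k <= m)%N -> (m <= d)%N ->
     ('C(m, k) - 1 + m <= d)%N ->
     exists (N : nat) (F : 'I_N -> box R d),
       @neighborly_family R k d N F /\
       ((d - 'C(m, k) + 1)%:R ^+ k * ('C(m, k)%:R / m%:R ^+ k) <= N%:R :> R).
Proof.
move=> k2 km md hC.
have C0 : (0 < 'C(m, k))%N by rewrite bin_gt0.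
set C := 'C(m, k) in C0 hC *.
set n := (d - C + 1)%N.
set q := (n %/ m)%N.
have m0 : (0 < m)%N by lia.
have hq : (m * q <= n)%N by rewrite mulnC leq_trunc_div.
have hd : (C.-1 + m * q <= d)%N by move: hq; rewrite /n; move: (m * q)%N; lia.
have [N [F [HF HN]]] := @construction R k m q d hd.
exists N, F; split => //.
have hn : (n < q.+1 * m)%N by apply: ltn_ceil.
have key : (n ^ k * C <= N * m ^ k)%N.
  rewrite HN -mulnA [(C * _)%N]mulnC leq_mul2r; apply/orP; right.
  rewrite -expnMn leq_exp2r; [exact: ltnW | lia].
have mk0 : 0 < m%:R ^+ k :> R by apply: exprn_gt0; rewrite ltr0n.
rewrite mulrA ler_pdivrMr // -!natrX -!natrM ler_nat.
exact: key.
Qed.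

Lemma part2 (R : realType) (k : nat) : (2 <= k)%N ->
     forall eps : R, 0 < eps ->
     exists D : nat, forall d : nat, (D <= d)%N ->
       exists (N : nat) (F : 'I_N -> box R d),
         @neighborly_family R k d N F /\
         (1 - eps) * (d%:R ^+ k / (k`!)%:R) <= N%:R.
Proof.
move=> k2 eps e0.
set M1 := Num.Def.archi_bound (2 * (k%:R) ^+ 2 / eps).
have hM1 : 2 * (k%:R) ^+ 2 / eps < M1%:R.
  apply: archi_boundP; apply: divr_ge0; [apply: mulr_ge0; [lra| apply: exprn_ge0; apply: ler0n]| lra].
set m := maxn k M1.
have km : (k <= m)%N by rewrite leq_maxl.
have Mm : (M1 <= m)%N by rewrite leq_maxr.
set C := 'C(m, k).
have C0 : (0 < C)%N by rewrite bin_gt0.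
set D1 := Num.Def.archi_bound (2 * k%:R * C%:R / eps).
have hD1 : 2 * k%:R * C%:R / eps < D1%:R.
  apply: archi_boundP; apply: divr_ge0; [apply: mulr_ge0; [apply: mulr_ge0; [lra| apply: ler0n]| apply: ler0n]| lra].
exists (maxn (C - 1 + m) D1) => d hd.
have hd1 : (C - 1 + m <= d)%N by move: hd; rewrite geq_max => /andP[].
have hd2 : (D1 <= d)%N by move: hd; rewrite geq_max => /andP[].
have [N [F [HF HN]]] := @part1 R k m d k2 km ltac:(lia) hd1.
exists N, F; split => //.
apply: le_trans HN; rewrite -/C.
set n := (d - C + 1)%N.
have nd : (n <= d)%N by rewrite /n; lia.
have nR : (n%:R : R) = d%:R - C%:R + 1.
  rewrite /n natrD natrB; [by [] | lia].
have mkR : ((m - k)%N%:R : R) = m%:R - k%:R by rewrite natrB.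
have hm : 2 * (k%:R) ^+ 2 < eps * m%:R :> R.
  have : (M1%:R <= m%:R :> R) by rewrite ler_nat.
  move: hM1; rewrite ltr_pdivrMr // => h1 h2. nra.
have hdd : 2 * k%:R * C%:R < eps * d%:R :> R.
  have : (D1%:R <= d%:R :> R) by rewrite ler_nat.
  move: hD1; rewrite ltr_pdivrMr // => h1 h2. nra.
have fk : ((m - k) ^ k)%:R <= (C * k`!)%:R :> R by rewrite ler_nat bin_ffact ffact_ge.
rewrite -[(C * k`!)%N]/(C * k`!)%N natrM natrX mkR in fk.
have K0 : 0 < (k`!)%:R :> R by rewrite ltr0n fact_gt0.
clearbody n C m D1 M1.
have m0 : 0 < m%:R :> R by rewrite ltr0n; lia.
have mk0 : 0 < m%:R ^+ k :> R by apply: exprn_gt0.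
have kmR : k%:R <= m%:R :> R by rewrite ler_nat.
have C1 : 1 <= C%:R :> R by rewrite ler1n.
have d0 : 0 <= d%:R :> R by apply: ler0n.
have ndR : n%:R <= d%:R :> R by rewrite ler_nat.
have n0 : 0 <= n%:R :> R by apply: ler0n.
have k0 : 0 <= k%:R :> R by apply: ler0n.
set x := d%:R * m%:R : R.
set y := n%:R * (m%:R - k%:R) : R.
have y0 : 0 <= y by apply: mulr_ge0 => //; lra.
have yx : y <= x.
  have := ler_wpM2r (ltW m0) ndR. have := mulr_ge0 n0 k0. rewrite /x /y. nra.
have xy : k%:R * (x - y) <= eps * x.
  have t1 : 2 * k%:R ^+ 2 * d%:R <= eps * m%:R * d%:R by apply: ler_wpM2r => //; lra.
  have t2 : 2 * k%:R * C%:R * m%:R <= eps * d%:R * m%:R by apply: ler_wpM2r; lra.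
  have t3 : (C%:R - 1) * (m%:R - k%:R) <= C%:R * m%:R :> R.
    have c1 : 0 <= C%:R - 1 :> R by lra.
    have h : 0 <= (C%:R - 1) * k%:R :> R := mulr_ge0 c1 k0. lra.
  have t4 : k%:R * ((C%:R - 1) * (m%:R - k%:R)) <= k%:R * (C%:R * m%:R) :> R by apply: ler_wpM2l.
  rewrite /x /y nR. move: t1 t2 t4. rewrite expr2.
  move: (C%:R : R) (m%:R : R) (k%:R : R) (d%:R : R) => Cr mr kr dr.
  clear -eps; lra.
have x0 : 0 <= x by lra.
have [k' ek] : exists k', k = k'.+1 by move: k2; case: (k) => [|k''] // _; exists k''.
have B : x ^+ k - k%:R * x ^+ k' * (x - y) <= y ^+ k by rewrite ek; exact: bern.
have xk0 : 0 <= x ^+ k' by apply: exprn_ge0.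
have B2 : k%:R * x ^+ k' * (x - y) <= eps * x ^+ k.
  rewrite ek exprS -ek; have := ler_wpM2r xk0 xy.
  by rewrite -!mulrA [x ^+ k' * _]mulrC.
have B3 : (1 - eps) * (d%:R ^+ k * m%:R ^+ k) <= n%:R ^+ k * (C%:R * (k`!)%:R).
  have ex : x ^+ k = d%:R ^+ k * m%:R ^+ k by rewrite /x exprMn.
  have ey : y ^+ k = n%:R ^+ k * (m%:R - k%:R) ^+ k by rewrite /y exprMn.
  have nk0 : 0 <= n%:R ^+ k :> R by apply: exprn_ge0.
  have := ler_wpM2l nk0 fk.
  rewrite -ex -ey => h; apply: le_trans h.
  move: B B2; move: (k%:R * x ^+ k' * (x - y)) (x ^+ k) (y ^+ k) => Z X Y.
  clear -eps; lra.
have e1 : (1 - eps) * (d%:R ^+ k / (k`!)%:R) = ((1 - eps) * (d%:R ^+ k * m%:R ^+ k)) / ((k`!)%:R * m%:R ^+ k).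
  by field; apply/andP; split; apply: lt0r_neq0.
have e2 : n%:R ^+ k * (C%:R / m%:R ^+ k) = (n%:R ^+ k * (C%:R * (k`!)%:R)) / ((k`!)%:R * m%:R ^+ k) :> R.
  by field; apply/andP; split; apply: lt0r_neq0.
rewrite e1 e2; apply: ler_wpM2r => //.
by rewrite invr_ge0; apply: mulr_ge0; apply: ltW.
Qed.

Theorem theorem2 (R : realType) :
  (forall k m d : nat, (2 <= k)%N -> (k <= m)%N -> (m <= d)%N ->
     ('C(m, k) - 1 + m <= d)%N ->
     exists (N : nat) (F : 'I_N -> box R d),
       @neighborly_family R k d N F /\
       ((d - 'C(m, k) + 1)%:R ^+ k * ('C(m, k)%:R / m%:R ^+ k) <= N%:R :> R))
  /\
  (forall k : nat, (2 <= k)%N ->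
     forall eps : R, 0 < eps ->
     exists D : nat, forall d : nat, (D <= d)%N ->
       exists (N : nat) (F : 'I_N -> box R d),
         @neighborly_family R k d N F /\
         (1 - eps) * (d%:R ^+ k / (k`!)%:R) <= N%:R).
Proof.
split; [exact: part1 | exact: part2].
Qed.
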